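(* (a) Suppose a mixed-level orthogonal array $OA(n,m,s_1\times\cdots\times s_m,2)$ exists with all $s_i\ge 3$, and let $t_1,\dots,t_m$ be integers with $1\le t_i\le s_i-2$. Then there exists an inter-class orthogonal main effect plan on $n$ runs with $2m$ factors partitioned into $m$ classes, the $i$-th class consisting of two factors $K_i$ and $L_i$ with $s_i-t_i$ and $t_i+1$ levels respectively. (b) This plan can be chosen so that, for each $i$, with levels of $K_i$ labelled $0,\dots,s_i-t_i-1$ and of $L_i$ labelled $0,\dots,t_i$: every pair $\{u,v\}$ of distinct nonzero levels of $K_i$ satisfies the pairwise proportional frequency condition with $L_i$, and every pair $\{u,v\}$ of distinct nonzero levels of $L_i$ satisfies the pairwise proportional frequency condition with $K_i$.
   Context: A mixed orthogonal array $OA(n,m,s_1\times\cdots\times s_m,2)$ is an $m\times n$ array whose $i$-th row has entries from an $s_i$-symbol set, such that for any two rows every ordered pair of symbols occurs equally often as a column. A main effect plan is an array with rows = factors and columns = runs. For factors $A,B$ on $n$ runs, $r_A(i)$ is the number of runs with $A$ at level $i$, and $n_{AB}(i,j)$ the number of runs with $A$ at level $i$ and $B$ at level $j$. $A$ and $B$ are orthogonal if $n_{AB}(i,j)=r_A(i)r_B(j)/n$ for all $i,j$. A plan is inter-class orthogonal (w.r.t. a partition of its factors into classes) if any two factors in different classes are orthogonal. A pair of levels $\{i,k\}$ of $A$ satisfies the pairwise proportional frequency condition with $B$ if $n_{AB}(i,j)/r_A(i)=n_{AB}(k,j)/r_A(k)$ for every level $j$ of $B$. *)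

(* Defs.v *)
(* Runs are indexed by 'I_n; a factor is a function from
   runs to levels (nat), with levels 0..s-1. *)
From mathcomp Require Import all_boot.
Set Implicit Arguments. Unset Strict Implicit. Unset Printing Implicit Defensive.

Definition lvl_count (n : nat) (f : 'I_n -> nat) (a : nat) : nat :=
  #|[set j : 'I_n | f j == a]|.

Definition pair_count (n : nat) (f g : 'I_n -> nat) (a b : nat) : nat :=
  #|[set j : 'I_n | (f j == a) && (g j == b)]|.

Definition is_factor (n : nat) (f : 'I_n -> nat) (s : nat) : Prop :=
  (forall j, f j < s) /\ (forall a, a < s -> 0 < lvl_count f a).

(* mixed orthogonal array OA(n, m, s_1 x ... x s_m, 2):
   an m x n array A (A i j = entry in row i, column j), row i over an
   s_i-symbol set; for any two distinct rows every ordered pair of symbols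
   occurs equally often as a column. *)
Definition is_OA2 (n m : nat) (s : 'I_m -> nat) (A : 'I_m -> 'I_n -> nat) : Prop :=
  (forall i, is_factor (A i) (s i)) /\
  (forall i k, i != k -> forall a b a' b',
      a < s i -> b < s k -> a' < s i -> b' < s k ->
      pair_count (A i) (A k) a b = pair_count (A i) (A k) a' b').

(* orthogonality: n_AB(a,b) = r_A(a) r_B(b) / n, cross-multiplied *)
Definition orthogonal (n : nat) (f : 'I_n -> nat) (sf : nat)
    (g : 'I_n -> nat) (sg : nat) : Prop :=
  forall a b, a < sf -> b < sg ->
    pair_count f g a b * n = lvl_count f a * lvl_count g b.

(* pairwise proportional frequency condition of levels {u,v} of f with g:
   n_fg(u,b)/r_f(u) = n_fg(v,b)/r_f(v) for all levels b of g
   (cross-multiplied; the r's are positive for genuine factors) *)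
Definition ppf (n : nat) (f g : 'I_n -> nat) (sg : nat) (u v : nat) : Prop :=
  forall b, b < sg ->
    pair_count f g u b * lvl_count f v = pair_count f g v b * lvl_count f u.

Definition interclass_orth_plan (n m : nat) (sK sL : 'I_m -> nat)
    (K L : 'I_m -> 'I_n -> nat) : Prop :=
  (forall i, is_factor (K i) (sK i) /\ is_factor (L i) (sL i)) /\
  (forall i i', i != i' ->
     [/\ orthogonal (K i) (sK i) (K i') (sK i'),
         orthogonal (K i) (sK i) (L i') (sL i') &
         orthogonal (L i) (sL i) (L i') (sL i')]).

(* Main.v *)
Require Import Defs.
From mathcomp Require Import all_boot zify.
From Stdlib Require Import Lia.

Lemma card_sumE (n : nat) (C : 'I_n -> bool) :
  #|[set j : 'I_n | C j]| = \sum_(j < n) (C j : nat).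
Proof.
rewrite -sum1_card big_mkcond /=; apply: eq_bigr => j _.
by rewrite inE; case: (C j).
Qed.

Lemma sum_pick (s v : nat) (F : nat -> nat) : v < s ->
  \sum_(a < s) ((v == a) * F a) = F v.
Proof.
move=> hv; rewrite (bigD1 (Ordinal hv)) //= eqxx mul1n big1 ?addn0 //.
move=> a ha; suff -> : (v == a) = false by [].
apply/negbTE; apply: contra ha => /eqP e; apply/eqP; apply: val_inj => /=. by [].
Qed.

Lemma key (n s1 s2 c : nat) (x y : 'I_n -> nat) (P Q : pred nat) :
  (forall j, x j < s1) -> (forall j, y j < s2) ->
  (forall a b, a < s1 -> b < s2 -> pair_count x y a b = c) ->
  #|[set j : 'I_n | P (x j) && Q (y j)]| =
    (\sum_(a < s1) (P a : nat)) * (\sum_(b < s2) (Q b : nat)) * c.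
Proof.
move=> hx hy hc; rewrite card_sumE.
transitivity (\sum_(j < n) \sum_(a < s1) \sum_(b < s2)
   ((P a : nat) * (Q b : nat) * (((x j == a) && (y j == b)) : nat))).
  apply: eq_bigr => j _.
  transitivity (\sum_(a < s1) ((x j == a) * \sum_(b < s2) ((y j == b) * ((P a : nat) * (Q b : nat))))); last first.
    apply: eq_bigr => a _; rewrite big_distrr /=; apply: eq_bigr => b _.
    by case: (x j == a); case: (y j == b); rewrite /= ?muln1 ?muln0 ?mul1n ?mul0n.
  rewrite (@sum_pick _ _ (fun a => \sum_(b < s2) ((y j == b) * ((P a : nat) * (Q b : nat)))) (hx j)).
  rewrite (@sum_pick _ _ (fun b => ((P (x j) : nat) * (Q b : nat))) (hy j)).
  by case: (P _); case: (Q _).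
rewrite exchange_big /=.
under eq_bigr => a _ do rewrite exchange_big /=.
transitivity (\sum_(a < s1) \sum_(b < s2) ((P a : nat) * (Q b : nat) * c)); last first.
  rewrite big_distrl /= big_distrl /=; apply: eq_bigr => a _.
  by rewrite big_distrr /= big_distrl /=.
apply: eq_bigr => a _; apply: eq_bigr => b _.
rewrite -big_distrr /=; congr (_ * _).
by rewrite -(hc a b (ltn_ord a) (ltn_ord b)) /pair_count card_sumE.
Qed.

Lemma sum_true s : \sum_(b < s) (true : nat) = s.
Proof. by rewrite sum1_card card_ord. Qed.

Lemma orth_comp n s1 s2 (x y : 'I_n -> nat) (f g : nat -> nat) sf sg :
  (forall j, x j < s1) -> (forall j, y j < s2) -> 0 < s1 -> 0 < s2 ->
  (forall a b a' b', a < s1 -> b < s2 -> a' < s1 -> b' < s2 ->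
      pair_count x y a b = pair_count x y a' b') ->
  orthogonal (fun j => f (x j)) sf (fun j => g (y j)) sg.
Proof.
move=> hx hy h1 h2 hc a b _ _.
have hc' : forall a b, a < s1 -> b < s2 -> pair_count x y a b = pair_count x y 0 0.
  by move=> a' b' ha hb; apply: hc.
have K := @key _ _ _ _ _ _ (fun v => f v == a) (fun v => g v == b) hx hy hc'.
have K1 := @key _ _ _ _ _ _ (fun v => f v == a) (fun v => true) hx hy hc'.
have K2 := @key _ _ _ _ _ _ (fun v => true) (fun v => g v == b) hx hy hc'.
have K3 := @key _ _ _ _ _ _ (fun v => true) (fun v => true) hx hy hc'.
rewrite /= sum_true in K1 K2 K3.
have En : n = #|[set j : 'I_n | true && true]|.
  by rewrite -[LHS]card_ord; apply: eq_card => j; rewrite inE.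
rewrite [X in _ * X = _]En.
have -> : lvl_count (fun j => f (x j)) a = #|[set j : 'I_n | (f (x j) == a) && true]|.
  by rewrite /lvl_count; apply: eq_card => j; rewrite !inE andbT.
have -> : lvl_count (fun j => g (y j)) b = #|[set j : 'I_n | true && (g (y j) == b)]|.
  by rewrite /lvl_count; apply: eq_card => j; rewrite !inE.
rewrite /pair_count K K1 K2 K3.
set A := \sum_(a0 < s1) _; set B := \sum_(b0 < s2) _; set c := pair_count _ _ _ _.
lia.
Qed.

Definition Kf (s t a : nat) := if a < s - t then a else 0.
Definition Lf (s t a : nat) := if a < s - t then 0 else a - (s - t) + 1.

Lemma pc_zero n (f g : 'I_n -> nat) u b :
  (forall j, f j = u -> g j = 0) -> pair_count f g u b = (b == 0) * lvl_count f u.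
Proof.
move=> h; rewrite /pair_count /lvl_count.
case: eqP => [->|nb]; rewrite ?mul1n ?mul0n.
  apply: eq_card => j; rewrite !inE; case: eqP => //= /h ->; by [].
apply/eqP; rewrite cards_eq0; apply/eqP/setP => j; rewrite !inE.
case: eqP => //= /h ->; case: eqP => // e; by case: nb.
Qed.

Lemma occ n (f : 'I_n -> nat) a : (exists j, f j = a) -> 0 < lvl_count f a.
Proof. by case=> j hj; apply/card_gt0P; exists j; rewrite inE hj. Qed.

Lemma occ_inv n (f : 'I_n -> nat) a : 0 < lvl_count f a -> exists j, f j = a.
Proof. by case/card_gt0P => j; rewrite inE => /eqP; exists j. Qed.

Theorem theorem3p1 (n m : nat) (s : 'I_m -> nat) (A : 'I_m -> 'I_n -> nat)
  (hA : is_OA2 s A) (hs : forall i, 3 <= s i)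
  (t : 'I_m -> nat) (ht : forall i, 1 <= t i <= s i - 2) :
  exists K L : 'I_m -> 'I_n -> nat,
    interclass_orth_plan (fun i => s i - t i) (fun i => t i + 1) K L /\
    (forall i,
      (forall u v, 0 < u -> 0 < v -> u != v ->
         u < s i - t i -> v < s i - t i -> ppf (K i) (L i) (t i + 1) u v) /\
      (forall u v, 0 < u -> 0 < v -> u != v ->
         u < t i + 1 -> v < t i + 1 -> ppf (L i) (K i) (s i - t i) u v)).
Proof.
case: hA => hF hP.
exists (fun i j => Kf (s i) (t i) (A i j)), (fun i j => Lf (s i) (t i) (A i j)).
split; [split|].
- move=> i; have [hlt hocc] := hF i; have := hs i; have := ht i => hti hsi.
  split; split.
  + move=> j; rewrite /Kf; case: ifP => // _; lia.
  + move=> a ha; have [j hj] : exists j, A i j = a by apply: occ_inv; apply: hocc; lia.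
    apply: occ; exists j; rewrite /Kf hj; case: ifP => //; lia.
  + move=> j; rewrite /Lf; have := hlt j; case: ifP => _ ?; lia.
  + move=> b hb; case: (posnP b) => [->|bp].
      have [j hj] : exists j, A i j = 0 by apply: occ_inv; apply: hocc; lia.
      apply: occ; exists j; rewrite /Lf hj; case: ifP => //; lia.
    have [j hj] : exists j, A i j = (b - 1 + (s i - t i)) by apply: occ_inv; apply: hocc; lia.
    apply: occ; exists j; rewrite /Lf hj; case: ifP => hh; lia.
- move=> i i' nii'.
  have [hlt _] := hF i; have [hlt' _] := hF i'.
  have hc := hP i i' nii'.
  have p1 : 0 < s i by have := hs i; lia.
  have p2 : 0 < s i' by have := hs i'; lia.
  split.
  + exact: (@orth_comp _ _ _ _ _ (Kf (s i) (t i)) (Kf (s i') (t i')) _ _ hlt hlt' p1 p2 hc).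
  + exact: (@orth_comp _ _ _ _ _ (Kf (s i) (t i)) (Lf (s i') (t i')) _ _ hlt hlt' p1 p2 hc).
  + exact: (@orth_comp _ _ _ _ _ (Lf (s i) (t i)) (Lf (s i') (t i')) _ _ hlt hlt' p1 p2 hc).
- move=> i; split.
  + move=> u v hu hv _ hus hvs b _.
    have Z : forall w, 0 < w -> forall j, Kf (s i) (t i) (A i j) = w -> Lf (s i) (t i) (A i j) = 0.
      move=> w hw j; rewrite /Kf /Lf; case: ifP => //; lia.
    rewrite (@pc_zero _ _ _ _ _ (Z u hu)) (@pc_zero _ _ _ _ _ (Z v hv)); lia.
  + move=> u v hu hv _ hus hvs b _.
    have Z : forall w, 0 < w -> forall j, Lf (s i) (t i) (A i j) = w -> Kf (s i) (t i) (A i j) = 0.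
      move=> w hw j; rewrite /Kf /Lf; case: ifP => //; lia.
    rewrite (@pc_zero _ _ _ _ _ (Z u hu)) (@pc_zero _ _ _ _ _ (Z v hv)); lia.
Qed.
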